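(* Let $n \geq 1$ be a real number. Then for every complex number $z$ with $|z - 1/2| \leq 1/2$ we have $|z^n - 1| \geq |z - 1|$. Moreover, if $n > 1$ and $z \neq 0, 1$ (with $|z-1/2|\le 1/2$), then the inequality is strict: $|z^n - 1| > |z-1|$.
   Context: For real non-integer $n$, $z^n$ denotes the principal branch $z^n = e^{n \log z}$ with $\log$ the principal logarithm (argument in $(-\pi,\pi]$), and $0^n = 0$. *)

(* Defs.v *)
From Stdlib Require Import Reals.
From Coquelicot Require Import Coquelicot.
Open Scope R_scope.

(* Principal argument of z = x + i y, with values in (-PI, PI]; Arg 0 = 0. *)
Definition Arg (z : C) : R :=
  let x := fst z in let y := snd z in
  if Rlt_dec 0 x then atan (y / x)
  else if Rlt_dec x 0 then
    (if Rle_dec 0 y then atan (y / x) + PI else atan (y / x) - PI)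
  else if Rlt_dec 0 y then PI / 2
  else if Rlt_dec y 0 then - (PI / 2)
  else 0.

Definition CLog (z : C) : C := (ln (Cmod z), Arg z).

Definition CExp (w : C) : C := (exp (fst w) * cos (snd w), exp (fst w) * sin (snd w)).

Definition Cpowr (z : C) (a : R) : C :=
  if Ceq_dec z 0 then 0%C else CExp (Cmult (RtoC a) (CLog z)).

(* Main.v *)
Require Import Defs.
From Stdlib Require Import Reals.
From Coquelicot Require Import Coquelicot.
From Stdlib Require Import Lra Psatz.
Open Scope R_scope.
Notation ft := Factorial.fact.
Lemma cos_ub4 a : - PI / 2 <= a -> a <= PI / 2 -> cos a <= 1 - a^2/2 + a^4/24.
Proof.
intros h1 h2. destruct (COS a h1 h2) as [_ H].
unfold cos_ub, cos_approx, cos_term in H. 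
cbn [sum_f_R0] in H.
replace (2*4)%nat with (S (S (2*3)))%nat in H by reflexivity.
rewrite !fact_simpl in H. rewrite !mult_INR in H.
assert (F: 0 < INR (ft (2*3))) by (apply lt_0_INR, Factorial.lt_O_fact).
set (F6 := INR (ft (2*3))) in *.
replace (2*0)%nat with 0%nat in H by reflexivity.
replace (2*1)%nat with 2%nat in H by reflexivity.
replace (2*2)%nat with 4%nat in H by reflexivity.
replace (INR (ft 0)) with 1 in H by reflexivity.
replace (INR (ft 2)) with 2 in H by (simpl; ring).
replace (INR (ft 4)) with 24 in H by (simpl; ring).
replace (INR (S (S (2*3)))) with 8 in H by (simpl; ring).
replace (INR (S (2*3))) with 7 in H by (simpl; ring).
assert (PI <= 4) by apply PI_4.
assert (a^2 <= 4) by nra.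
eapply Rle_trans; [exact H|].
assert (0 <= a^6/F6*(1 - a^2/56)).
{ apply Rmult_le_pos. apply Rmult_le_pos; [nra|apply Rlt_le, Rinv_0_lt_compat; lra]. nra. }
match goal with |- ?L <= _ => replace L with (1 - a^2/2 + a^4/24 - a^6/F6*(1 - a^2/56)) by (simpl; field; lra) end.
lra.
Qed.
Lemma sin_lb3 a : 0 <= a -> a <= PI -> a - a^3/6 <= sin a.
Proof.
intros h1 h2. destruct (SIN a h1 h2) as [H _].
unfold sin_lb, sin_approx, sin_term in H. cbn [sum_f_R0] in H.
replace (2*3+1)%nat with (S (S (2*2+1)))%nat in H by reflexivity.
rewrite !fact_simpl in H. rewrite !mult_INR in H.
assert (F: 0 < INR (ft (2*2+1))) by (apply lt_0_INR, Factorial.lt_O_fact).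
set (F5 := INR (ft (2*2+1))) in *.
replace (2*0+1)%nat with 1%nat in H by reflexivity.
replace (2*1+1)%nat with 3%nat in H by reflexivity.
replace (INR (ft 1)) with 1 in H by reflexivity.
replace (INR (ft 3)) with 6 in H by (simpl; ring).
replace (INR (S (S (2*2+1)))) with 7 in H by (simpl; ring).
replace (INR (S (2*2+1))) with 6 in H by (simpl; ring).
assert (PI <= 4) by apply PI_4.
assert (a^2 <= 16) by nra.
eapply Rle_trans; [|exact H].
assert (0 <= a^5/F5*(1 - a^2/42)).
{ apply Rmult_le_pos. apply Rmult_le_pos; [apply pow_le; lra|apply Rlt_le, Rinv_0_lt_compat; lra]. nra. }
match goal with |- _ <= ?L => replace L with (a - a^3/6 + a^5/F5*(1 - a^2/42)) by (simpl; field; lra) end.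
lra.
Qed.
Lemma cos_lb6 a : - PI / 2 <= a -> a <= PI / 2 -> 1 - a^2/2 + a^4/24 - a^6/720 <= cos a.
Proof.
intros h1 h2. destruct (COS a h1 h2) as [H _].
unfold cos_lb, cos_approx, cos_term in H. cbn [sum_f_R0] in H.
replace (INR (ft (2*0))) with 1 in H by reflexivity.
replace (INR (ft (2*1))) with 2 in H by (simpl; ring).
replace (INR (ft (2*2))) with 24 in H by (simpl; ring).
replace (INR (ft (2*3))) with 720 in H by (simpl; ring).
eapply Rle_trans; [|exact H]. simpl. lra.
Qed.
Lemma sin_lb7 a : 0 <= a -> a <= PI -> a - a^3/6 + a^5/120 - a^7/5040 <= sin a.
Proof.
intros h1 h2. destruct (SIN a h1 h2) as [H _].
unfold sin_lb, sin_approx, sin_term in H. cbn [sum_f_R0] in H.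
replace (INR (ft (2*0+1))) with 1 in H by reflexivity.
replace (INR (ft (2*1+1))) with 6 in H by (simpl; ring).
replace (INR (ft (2*2+1))) with 120 in H by (simpl; ring).
replace (2*3+1)%nat with (S (S 5))%nat in H by reflexivity.
rewrite !fact_simpl, !mult_INR in H.
replace (INR (ft 5)) with 120 in H by (simpl; ring).
replace (INR (S (S 5))) with 7 in H by (simpl; ring).
replace (INR (S 5)) with 6 in H by (simpl; ring).
eapply Rle_trans; [|exact H]. simpl. lra.
Qed.
Lemma key0 g t : 0 < g -> 0 <= t <= PI/2 -> 0 < g*cos t - g*exp(-g) + t*sin t.
Proof.
intros hg [h1 h2].
assert (PI <= 4) by apply PI_4.
assert (PI > 3) by (pose proof PI2_3_2; lra).
pose proof (cos_ub4 t ltac:(lra) h2) as Hc.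
pose proof (sin_lb3 t h1 ltac:(lra)) as Hs.
assert (c0 : 0 <= cos t) by (apply cos_ge_0; lra).
assert (c1 : cos t <= 1) by apply COS_bound.
assert (Hb : 1 - cos t <= t * sin t).
{ assert (t^2 <= 4) by nra.
  pose proof (cos_lb6 t ltac:(lra) h2) as C6.
  pose proof (sin_lb7 t h1 ltac:(lra)) as S7.
  assert (A1: t*sin t >= t*(t - t^3/6 + t^5/120 - t^7/5040)) by (apply Rle_ge, Rmult_le_compat_l; lra).
  assert (A2: 0 <= t^2 * (4 - t^2)) by (apply Rmult_le_pos; nra).
  assert (A3: 0 <= t^6 * (35 - t^2)) by (apply Rmult_le_pos; [apply pow_le; lra| nra]).
  replace (t*(t - t^3/6 + t^5/120 - t^7/5040)) with (t^2 - t^4/6 + t^6/120 - t^8/5040) in A1 by field.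
  replace (t^2*(4-t^2)) with (4*t^2 - t^4) in A2 by ring.
  replace (t^6*(35-t^2)) with (35*t^6 - t^8) in A3 by ring.
  lra. }
assert (Hb0 : 0 <= t * sin t) by lra.
assert (He : exp (-g) * (1+g) <= 1).
{ pose proof (exp_ineq1_le g). rewrite exp_Ropp.
  assert (0 < exp g) by apply exp_pos.
  apply (Rmult_le_reg_l (exp g)); auto. rewrite <- Rmult_assoc, Rinv_r by lra. lra. }
assert (0 < exp (-g)) by apply exp_pos.
assert (0 < g^2*cos t + 1 - cos t).
{ destruct (Req_dec (cos t) 0) as [E|E]. rewrite E; lra.
  assert (0 < g^2*cos t) by (apply Rmult_lt_0_compat; [nra|lra]). lra. }
apply (Rmult_lt_reg_r (1+g)); [lra|]. rewrite Rmult_0_l. nra.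
Qed.
Lemma key g t : 0 < g -> -PI/2 <= t <= PI/2 -> 0 < g*cos t - g*exp(-g) + t*sin t.
Proof.
intros hg ht. destruct (Rle_dec 0 t).
apply key0; lra.
replace (t * sin t) with ((-t) * sin (-t)) by (rewrite sin_neg; ring).
rewrite <- (cos_neg t). apply key0; lra.
Qed.

Definition FF (L b s : R) := exp(s*L)^2 - 2*exp(s*L)*cos(s*b).

Lemma dF L b s : is_derive (FF L b) s (2*exp(s*L)*(L*exp(s*L) - L*cos(s*b) + b*sin(s*b))).
Proof. unfold FF. auto_derive. auto. ring. Qed.

Lemma regionA L b n : L < 0 -> 1 < n -> n * Rabs b <= PI/2 -> FF L b 1 < FF L b n.
Proof.
intros hL hn hb.
pose proof (MVT_gen (FF L b) 1 n (fun s => 2*exp(s*L)*(L*exp(s*L) - L*cos(s*b) + b*sin(s*b)))) as M.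
cbv zeta in M. rewrite Rmin_left, Rmax_right in M by lra.
destruct M as [c [[hc1 hc2] E]].
- intros x _. apply dF.
- intros x _. apply continuity_pt_filterlim. exact (ex_derive_continuous (FF L b) x (ex_intro _ _ (dF L b x))).
- assert (Hb : Rabs (c*b) <= PI/2).
  { rewrite Rabs_mult, (Rabs_right c) by lra. assert (0 <= Rabs b) by apply Rabs_pos. nra. }
  assert (Hb2 : -PI/2 <= c*b <= PI/2).
  { revert Hb. unfold Rabs. destruct Rcase_abs; intros; lra. }
  pose proof (key (-c*L) (c*b) ltac:(nra) Hb2) as K.
  replace (- (- c * L)) with (c*L) in K by ring.
  assert (P: 0 < L * exp (c * L) - L * cos (c * b) + b * sin (c * b)).
  { apply (Rmult_lt_reg_l c); [lra|]. rewrite Rmult_0_r.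
    replace (c * (L * exp (c * L) - L * cos (c * b) + b * sin (c * b))) with
      (- c * L * cos (c * b) - - c * L * exp (c * L) + c * b * sin (c * b)) by ring. exact K. }
  assert (0 < exp (c*L)) by apply exp_pos.
  assert (0 < 2 * exp (c * L) * (L * exp (c * L) - L * cos (c * b) + b * sin (c * b))).
  { apply Rmult_lt_0_compat; lra. }
  nra.
Qed.

Lemma F1_bound r b : 0 < r -> r <= cos b -> FF (ln r) b 1 <= - r^2.
Proof.
intros hr hc. unfold FF. rewrite !Rmult_1_l, exp_ln by lra. nra.
Qed.

Lemma cos_abs_mul n b : cos (n * b) = cos (n * Rabs b).
Proof.
unfold Rabs. destruct Rcase_abs; [|reflexivity].
replace (n * - b) with (- (n*b)) by ring. now rewrite cos_neg.
Qed.

Lemma regionB r b n : 0 < r < 1 -> r <= cos b -> 0 <= n -> PI/2 <= n * Rabs b <= 3*(PI/2) ->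
  FF (ln r) b 1 < FF (ln r) b n.
Proof.
intros hr hc hn hb.
pose proof (F1_bound r b ltac:(lra) hc).
assert (cos (n*b) <= 0) by (rewrite cos_abs_mul; apply cos_le_0; lra).
assert (0 < exp (n * ln r)) by apply exp_pos.
unfold FF at 2. nra.
Qed.

Lemma regionC r b n : 0 < r < 1 -> r <= cos b -> Rabs b < PI/2 -> 3*(PI/2) < n * Rabs b ->
  FF (ln r) b 1 < FF (ln r) b n.
Proof.
intros hr hc hb hnb.
pose proof (F1_bound r b ltac:(lra) hc) as F1.
assert (PI <= 4) by apply PI_4.
assert (PI > 3) by (pose proof PI2_3_2; lra).
assert (hL : ln r < 0) by (rewrite <- ln_1; apply ln_increasing; lra).
set (L := ln r) in *.
assert (hb0 : 0 <= Rabs b) by apply Rabs_pos.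
assert (hn0 : 0 < n) by (destruct (Rle_dec n 0); [nra|lra]).
assert (hn3 : 3 < n) by nra.
set (e := exp (n*L)).
assert (he : 0 < e) by apply exp_pos.
assert (FFn : e^2 - 2*e <= FF L b n).
{ unfold FF. fold e. assert (cos (n*b) <= 1) by apply COS_bound. nra. }
set (S := sqrt (1 - r^2)).
assert (hS0 : 0 <= S) by apply sqrt_pos.
assert (hS2 : S*S = 1 - r^2) by (apply sqrt_sqrt; nra).
assert (hS1 : S < 1) by nra.
assert (hr2 : exp (2*L) = r^2).
{ replace (2*L) with (L+L) by ring. rewrite exp_plus. unfold L. rewrite exp_ln by lra. ring. }
assert (Claim : e * (1+S) < r^2).
{ destruct (Rle_dec r (1/2)) as [hr12|hr12].
  - assert (e <= r^3).
    { replace (r^3) with (exp (3*L)).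
      - apply Rlt_le, exp_increasing. nra.
      - replace (3*L) with (L+(L+L)) by ring. rewrite !exp_plus. unfold L. rewrite exp_ln by lra. ring. }
    nra.
  - set (p := acos r).
    assert (hrr : -1 <= r <= 1) by lra.
    assert (cp : cos p = r) by (apply cos_acos; exact hrr).
    assert (sp : sin p = S) by (unfold p, S; rewrite sin_acos by exact hrr; unfold Rsqr; f_equal; ring).
    assert (pb := acos_bound r). fold p in pb.
    assert (p0 : 0 < p).
    { destruct (Req_dec p 0) as [E|E]; [|lra]. rewrite E, cos_0 in cp. lra. }
    assert (p3 : p < PI/3).
    { destruct (Rlt_le_dec p (PI/3)) as [|H3]; [auto|].
      destruct (Req_dec p (PI/3)) as [E|E].
      - rewrite E, cos_PI3 in cp. lra.
      - assert (cos p < cos (PI/3)) by (apply cos_decreasing_1; lra). rewrite cos_PI3 in H1. lra. }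
    assert (bp : Rabs b <= p).
    { destruct (Rle_dec (Rabs b) p) as [|H3]; [auto|].
      assert (cos (Rabs b) < cos p) by (apply cos_decreasing_1; lra).
      rewrite <- (Rmult_1_l (Rabs b)), <- cos_abs_mul, Rmult_1_l in H1. lra. }
    assert (hnp : 3*(PI/2) < n*p) by nra.
    assert (Lc : L <= r - 1).
    { unfold L. rewrite <- (ln_exp (r-1)). apply ln_le; [lra|].
      pose proof (exp_ineq1_le (r-1)). lra. }
    pose proof (cos_ub4 p ltac:(lra) ltac:(lra)) as Cu.
    assert (pp : p^2 <= 16/9) by nra.
    assert (L2 : L <= -(23/54)*p^2).
    { assert (p^4 <= 16/9 * p^2) by (replace (p^4) with (p^2*p^2) by ring; nra). lra. }
    assert (Sp : S < p) by (rewrite <- sp; apply sin_lt_x; lra).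
    assert (Ep : 1 + S < exp p) by (pose proof (exp_ineq1_le p); lra).
    assert (Ee : e = r^2 * exp ((n-2)*L)).
    { unfold e. rewrite <- hr2, <- exp_plus. f_equal. ring. }
    assert (Neg : (n-2)*L + p < 0).
    { assert ((n-2)*L <= -(23/54)*p^2*(n-2)) by nra.
      assert ((n-2)*p > 5/2) by nra.
      assert (p * ((n-2)*p*(23/54)) > p) by nra. nra. }
    assert (exp ((n-2)*L + p) < 1) by (rewrite <- exp_0; apply exp_increasing; lra).
    rewrite exp_plus in H1.
    assert (0 < exp ((n-2)*L)) by apply exp_pos.
    assert (0 < r^2) by nra.
    rewrite Ee.
    assert (r ^ 2 * exp ((n - 2) * L) * (1 + S) < r ^ 2 * exp ((n - 2) * L) * exp p) by
      (apply Rmult_lt_compat_l; [apply Rmult_lt_0_compat|]; lra).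
    nra. }
assert (e < 1 - S).
{ assert ((1-S)*(1+S) = r^2) by nra. nra. }
assert (S*S < (1-e)*(1-e)) by nra.
nra.
Qed.

Lemma core r b n : 0 < r < 1 -> r <= cos b -> Rabs b < PI/2 -> 1 < n ->
  FF (ln r) b 1 < FF (ln r) b n.
Proof.
intros hr hc hb hn.
assert (hL : ln r < 0) by (rewrite <- ln_1; apply ln_increasing; lra).
destruct (Rle_dec (n * Rabs b) (PI/2)).
- apply regionA; lra.
- destruct (Rle_dec (n * Rabs b) (3*(PI/2))).
  + apply regionB; lra.
  + apply regionC; lra.
Qed.


Lemma Cmod_m1 (w : C) : Cmod (Cminus w 1%C) = sqrt ((fst w - 1)^2 + (snd w)^2).
Proof. destruct w as [a c]. unfold Cmod, Cminus, Cplus, Copp. simpl. f_equal. ring. Qed.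

Lemma polar (z : C) (n : R) : z <> 0%C -> 0 < fst z ->
  Cpowr z n = (exp (n * ln (Cmod z)) * cos (n * atan (snd z / fst z)),
               exp (n * ln (Cmod z)) * sin (n * atan (snd z / fst z))).
Proof.
intros hz hx. unfold Cpowr. destruct (Ceq_dec z 0) as [E|_]; [contradiction|].
unfold CExp, CLog, Arg, Cmult, RtoC. simpl.
destruct (Rlt_dec 0 (fst z)) as [_|H]; [|lra].
f_equal; f_equal; f_equal; ring.
Qed.

Lemma repr (z : C) : Cmod (Cminus z (RtoC (1/2))) <= 1/2 -> z <> 0%C -> z <> 1%C ->
  exists r b, 0 < r < 1 /\ r <= cos b /\ Rabs b < PI/2 /\
    Cmod (Cminus z 1%C) = sqrt (1 + FF (ln r) b 1) /\
    forall n, Cmod (Cminus (Cpowr z n) 1%C) = sqrt (1 + FF (ln r) b n).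
Proof.
intros hD hz0 hz1.
destruct z as [x y].
assert (hq : (x - 1/2)^2 + y^2 <= 1/4).
{ assert (E : Cmod (Cminus (x,y) (RtoC (1/2))) = sqrt ((x-1/2)^2+y^2)) by
    (unfold Cmod, Cminus, Cplus, Copp, RtoC; simpl; f_equal; ring).
  rewrite E in hD. set (q := (x-1/2)^2+y^2) in *.
  assert (0 <= q) by (unfold q; apply Rplus_le_le_0_compat; apply pow2_ge_0).
  pose proof (sqrt_sqrt q H). pose proof (sqrt_pos q). nra. }
assert (hpos : 0 < x^2 + y^2).
{ destruct (Req_dec x 0) as [Ex|Ex].
  - destruct (Req_dec y 0) as [Ey|Ey].
    + exfalso. apply hz0. subst. reflexivity.
    + nra.
  - nra. }
assert (hx : 0 < x) by nra.
set (r := Cmod (x,y)).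
assert (hr2 : r * r = x^2 + y^2) by (unfold r, Cmod; simpl fst; simpl snd; apply sqrt_sqrt; nra).
assert (hr0 : 0 < r) by (unfold r, Cmod; simpl; apply sqrt_lt_R0; nra).
assert (hr1 : r < 1).
{ assert (y^2 >= 0) by (apply Rle_ge, pow2_ge_0).
  assert (xr : x <= r) by nra.
  assert (r*r <= r) by nra.
  assert (r <= 1) by nra.
  destruct (Req_dec r 1) as [E|E]; [|lra].
  exfalso. apply hz1. assert (x = 1) by nra. assert (y = 0) by nra. subst. reflexivity. }
set (b := atan (y/x)).
assert (hsq : sqrt (1 + (y/x)²) = r / x).
{ rewrite <- (sqrt_Rsqr (r/x)) by (apply Rlt_le, Rdiv_lt_0_compat; lra).
  f_equal. unfold Rsqr. replace (r/x*(r/x)) with ((r*r)/(x*x)) by (field; lra). rewrite hr2. field. lra. }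
assert (cb : cos b = x / r) by (unfold b; rewrite cos_atan, hsq; field; lra).
assert (sb : sin b = y / r) by (unfold b; rewrite sin_atan, hsq; field; lra).
exists r, b. split; [lra|]. split.
{ rewrite cb. apply (Rmult_le_reg_r r); [lra|]. unfold Rdiv. rewrite Rmult_assoc, Rinv_l by lra. nra. }
split.
{ pose proof (atan_bound (y/x)). fold b in H. unfold Rabs. destruct Rcase_abs; lra. }
split.
- rewrite Cmod_m1. simpl. f_equal. unfold FF. rewrite !Rmult_1_l, exp_ln by lra.
  rewrite cb. field_simplify; [|lra]. replace (r^2) with (x^2+y^2) by (rewrite <- hr2; ring). ring.
- intros n. rewrite polar; [|exact hz0|simpl; lra]. rewrite Cmod_m1. simpl fst; simpl snd.
  fold r. fold b. f_equal. unfold FF.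
  pose proof (sin2_cos2 (n*b)). unfold Rsqr in H. nra.
Qed.

Lemma Cpowr_0 n : Cpowr 0%C n = 0%C.
Proof. unfold Cpowr. destruct (Ceq_dec 0 0); [reflexivity|congruence]. Qed.

Lemma Cpowr_1 n : Cpowr 1%C n = 1%C.
Proof.
rewrite polar.
- simpl. unfold Cmod. simpl. replace (1 * (1 * 1) + 0 * (0 * 1)) with 1 by ring.
  rewrite sqrt_1, ln_1.
  replace (0/1) with 0 by field. rewrite atan_0, !Rmult_0_r, exp_0, cos_0, sin_0.
  unfold RtoC. f_equal; ring.
- intro H. injection H. lra.
- simpl. lra.
Qed.

Theorem mainTheorem1 (n : R) (Hn : 1 <= n) :
  (forall z : C, Cmod (Cminus z (RtoC (1/2))) <= 1/2 ->
     Cmod (Cminus z 1%C) <= Cmod (Cminus (Cpowr z n) 1%C)) /\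
  (1 < n -> forall z : C, Cmod (Cminus z (RtoC (1/2))) <= 1/2 ->
     z <> 0%C -> z <> 1%C ->
     Cmod (Cminus z 1%C) < Cmod (Cminus (Cpowr z n) 1%C)).
Proof.
assert (S : 1 < n -> forall z : C, Cmod (Cminus z (RtoC (1/2))) <= 1/2 ->
     z <> 0%C -> z <> 1%C ->
     Cmod (Cminus z 1%C) < Cmod (Cminus (Cpowr z n) 1%C)).
{ intros hn z hD h0 h1.
  destruct (repr z hD h0 h1) as [r [b [hr [hc [hb [E1 En]]]]]].
  rewrite E1, En. apply sqrt_lt_1_alt. split.
  - unfold FF. rewrite !Rmult_1_l, exp_ln by lra. assert (cos b <= 1) by apply COS_bound. nra.
  - pose proof (core r b n hr hc hb hn). lra. }
split; [|exact S].
intros z hD.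
destruct (Ceq_dec z 0) as [E0|h0]. { subst. rewrite Cpowr_0. lra. }
destruct (Ceq_dec z 1) as [E1|h1]. { subst. rewrite Cpowr_1. lra. }
destruct (Req_dec n 1) as [En|En].
- subst. destruct (repr z hD h0 h1) as [r [b [hr [hc [hb [E1 En]]]]]].
  rewrite E1, En. lra.
- apply Rlt_le, S; auto; lra.
Qed.
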